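(* Let $\Gamma$ be an extended Dynkin graph with standard integral Cartan matrix and $v\in\mathbb{R}^I$ a configuration. Suppose there are two ways, beginning with $v$, of successively firing vertices of amplitude $<-1$ until no vertex of amplitude $<-1$ is left. Then these two firing sequences have the same length and terminate at the same configuration.
   Context: $\Gamma$ is an extended Dynkin graph with vertex set $I$ and standard integral generalized Cartan matrix $C=(c_{ij})$. Firing vertex $i$ replaces $v\in\mathbb{R}^I$ by $f_i(v)$, where $f_i(v)_i=-v_i$, $f_i(v)_j=v_j-c_{ij}v_i$ if $j$ is adjacent to $i$, and $f_i(v)_j=v_j$ otherwise; ''firing a vertex of amplitude $<-1$'' means firing $i$ when $v_i<-1$. *)

(* Defs.v *)
From mathcomp Require Import all_boot all_order all_algebra.
From mathcomp Require Import reals.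
Set Implicit Arguments. Unset Strict Implicit. Unset Printing Implicit Defensive.
Import Order.TTheory GRing.Theory Num.Theory.
Local Open Scope ring_scope.

Definition is_GCM (n : nat) (C : 'M[int]_n) : Prop :=
  (forall i, C i i = 2) /\
  (forall i j, i != j -> C i j <= 0) /\
  (forall i j, (C i j == 0) = (C j i == 0)).

Definition indecomposable (n : nat) (C : 'M[int]_n) : Prop :=
  forall J : {set 'I_n}, J != set0 -> J != setT ->
    exists j k, [/\ j \in J, k \notin J & C j k != 0].

(* Affine (= extended Dynkin) type, following Kac, Thm 4.3: an indecomposable
   GCM admitting a null vector with all coordinates positive. *)
Definition extended_dynkin (R : realType) (n : nat) (C : 'M[int]_n) : Prop :=
  [/\ is_GCM C, indecomposable C &
      exists u : 'I_n -> R, (forall i, 0 < u i) /\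
        (forall i, \sum_(j < n) (C i j)%:~R * u j = 0)].

Definition adjacent (n : nat) (C : 'M[int]_n) (i j : 'I_n) : bool :=
  (i != j) && (C i j != 0).

Definition fire (R : realType) (n : nat) (C : 'M[int]_n) (i : 'I_n)
    (v : 'I_n -> R) : 'I_n -> R :=
  fun j => if j == i then - v i
           else if adjacent C i j then v j - (C i j)%:~R * v i
           else v j.

Definition run (R : realType) (n : nat) (C : 'M[int]_n) (v : 'I_n -> R)
    (s : seq 'I_n) : 'I_n -> R :=
  foldl (fun w i => fire C i w) v s.

Fixpoint legal_seq (R : realType) (n : nat) (C : 'M[int]_n) (v : 'I_n -> R)
    (s : seq 'I_n) : Prop :=
  match s with
  | [::] => True
  | i :: s' => v i < -1 /\ legal_seq C (fire C i v) s'
  end.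

Definition terminal (R : realType) (n : nat) (v : 'I_n -> R) : Prop :=
  forall i, -1 <= v i.

(* Main.v *)
Require Import Defs.
From mathcomp Require Import all_boot all_order all_algebra.
From mathcomp Require Import reals ring lra zify.
From Stdlib Require Import FunctionalExtensionality.
Import Order.TTheory GRing.Theory Num.Theory.
Local Open Scope ring_scope.

Lemma fireE (R : realType) (n : nat) (C : 'M[int]_n) (hC : is_GCM C) i (v : 'I_n -> R) k :
  fire C i v k = v k - (C i k)%:~R * v i.
Proof.
case: hC => [h2 [hneg hsym]].
rewrite /fire /adjacent; case: eqP => [->|/eqP ne]; first by rewrite h2; lra.
rewrite eq_sym ne /=; case: eqP => [->|//]; by rewrite mulr0z mul0r subr0.
Qed.

Arguments fireE {R n C}.
Section Poly.
Variables (R : realType) (n : nat) (C : 'M[int]_n) (hG : is_GCM C).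
Variables (v : 'I_n -> R) (i j : 'I_n).
Hypothesis hii : (C i i)%:~R = 2 :> R.
Hypothesis hjj : (C j j)%:~R = 2 :> R.

Ltac solve_it hA hB p q :=
  exists p, q; split; [ rewrite /= ?(fireE hG) ?hii ?hjj ?hA ?hB; repeat split; first [done | lra]
   | rewrite /= ?(fireE hG) ?hii ?hjj ?hA ?hB; repeat split; first [done | lra]
   | by []
   | apply: functional_extensionality => k; rewrite /run /= ?(fireE hG) ?hii ?hjj ?hA ?hB; ring].

Definition concl := exists p q, [/\ legal_seq C v (i :: p), legal_seq C v (j :: q), size p = size q &
     run C v (i :: p) = run C v (j :: q)].

Lemma case11 (hA : (C i j)%:~R = -1 :> R) (hB : (C j i)%:~R = -1 :> R) (Hi : v i < -1) (Hj : v j < -1) : concl.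
Proof. solve_it hA hB [:: j; i] [:: i; j]. Qed.
Lemma case12 (hA : (C i j)%:~R = -1 :> R) (hB : (C j i)%:~R = -2 :> R) (Hi : v i < -1) (Hj : v j < -1) : concl.
Proof. solve_it hA hB [:: j; i; j] [:: i; j; i]. Qed.
Lemma case21 (hA : (C i j)%:~R = -2 :> R) (hB : (C j i)%:~R = -1 :> R) (Hi : v i < -1) (Hj : v j < -1) : concl.
Proof. solve_it hA hB [:: j; i; j] [:: i; j; i]. Qed.
Lemma case13 (hA : (C i j)%:~R = -1 :> R) (hB : (C j i)%:~R = -3 :> R) (Hi : v i < -1) (Hj : v j < -1) : concl.
Proof. solve_it hA hB [:: j; i; j; i; j] [:: i; j; i; j; i]. Qed.
Lemma case31 (hA : (C i j)%:~R = -3 :> R) (hB : (C j i)%:~R = -1 :> R) (Hi : v i < -1) (Hj : v j < -1) : concl.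
Proof. solve_it hA hB [:: j; i; j; i; j] [:: i; j; i; j; i]. Qed.
End Poly.

Lemma fin_cases (a b : nat) : (0 < a)%N -> (0 < b)%N -> (a * b <= 4)%N ->
  [|| (a == 1%N) && (b == 1%N), (a == 1%N) && (b == 2%N), (a == 2%N) && (b == 1%N),
      (a == 1%N) && (b == 3%N), (a == 3%N) && (b == 1%N) | (a * b == 4)%N].
Proof.
move=> a0 b0 h.
have ha : (a <= 4)%N := leq_trans (leq_pmulr _ b0) h.
have hb : (b <= 4)%N := leq_trans (leq_pmull _ a0) h.
case: a a0 h ha => [|[|[|[|[|a]]]]] //= _ h _; case: b b0 h hb => [|[|[|[|[|b]]]]] //=.
Qed.

Lemma split3 (R : realType) n (F : 'I_n -> R) i j : i != j ->
  \sum_k F k = F i + F j + \sum_(k | (k != i) && (k != j)) F k.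
Proof.
move=> nij; rewrite (bigD1 i) //= (bigD1 j) /=; last by rewrite eq_sym.
by rewrite addrA.
Qed.

Section Gen.
Variables (R : realType) (n : nat) (C : 'M[int]_n).

Lemma run_cat (v : 'I_n -> R) s t : run C v (s ++ t) = run C (run C v s) t.
Proof. by rewrite /run foldl_cat. Qed.

Lemma legal_cat (v : 'I_n -> R) s t : legal_seq C v (s ++ t) <-> legal_seq C v s /\ legal_seq C (run C v s) t.
Proof.
elim: s v => [|i s IH] v /=; first by split => // [[]].
rewrite IH; split; [by case=> ? [? ?]| by case=> [[? ?] ?]].
Qed.

Lemma extend M (w : 'I_n -> R) : (forall t, legal_seq C w t -> (size t <= M)%N) ->
  exists t, legal_seq C w t /\ terminal (run C w t).
Proof.
elim: M w => [|M IH] w H.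
  case: (boolP [forall i, -1 <= w i]) => [/forallP T|/forallPn [i Hi]].
    by exists [::].
  have := H [:: i]; rewrite /= ltNge Hi => /(_ (conj isT I)) //.
case: (boolP [forall i, -1 <= w i]) => [/forallP T|/forallPn [i Hi]].
  by exists [::].
have [t [Lt Tt]] : exists t, legal_seq C (fire C i w) t /\ terminal (run C (fire C i w) t).
  apply: IH => t Lt; have := H (i :: t); rewrite /= ltNge Hi; by apply.
by exists (i :: t); split => //=; rewrite ltNge Hi.
Qed.

Hypothesis poly : forall (v : 'I_n -> R) i j, i != j -> v i < -1 -> v j < -1 ->
  (exists s, legal_seq C v s /\ terminal (run C v s)) ->
  exists p q, [/\ legal_seq C v (i :: p), legal_seq C v (j :: q), size p = size q &
     run C v (i :: p) = run C v (j :: q)].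

Lemma main N : forall (v : 'I_n -> R) s1, size s1 = N -> legal_seq C v s1 -> terminal (run C v s1) ->
  forall s2, legal_seq C v s2 -> (size s2 <= N)%N /\
    (terminal (run C v s2) -> size s2 = N /\ run C v s2 = run C v s1).
Proof.
elim: N => [|N IH] v [|i s1] //= Hs L1 T1 [|j s2] L2.
- by [].
- case: L2 => Hj _; exfalso; move: (T1 j); lra.
- split => // T2; exfalso; move: (T2 i); case: L1 => Hi _; rewrite /run /=; lra.
- case: Hs => Hs; case: L1 => Hi L1; case: L2 => Hj L2.
  have {}IHi := IH _ _ Hs L1 T1.
  case: (eqVneq i j) => [eij|nij].
    subst j; have [h1 h2] := IHi _ L2; split => // T2; have [E1 E2] := h2 T2; split; [by rewrite /= E1 | exact: E2].
  have [p [q [Lp Lq Spq Epq]]] := @poly v i j nij Hi Hj (ex_intro _ (i :: s1) (conj (conj Hi L1) T1)).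
  case: Lp => _ Lp; case: Lq => _ Lq.
  have [Sp _] := IHi _ Lp.
  have [t [Lt Tt]] : exists t, legal_seq C (run C (fire C i v) p) t /\ terminal (run C (run C (fire C i v) p) t).
    apply: (@extend (N - size p)%N) => t Lt.
    have [h _] := IHi (p ++ t) (proj2 (legal_cat _ _ _) (conj Lp Lt)).
    rewrite size_cat in h; rewrite -(leq_add2l (size p)) subnKC //; exact: leq_trans (leq_addr _ _) h.
  have Lpt : legal_seq C (fire C i v) (p ++ t) by apply/legal_cat.
  have [_ h] := IHi _ Lpt; rewrite run_cat in h; have [Spt Ept] := h Tt.
  have Ew : run C (fire C j v) q = run C (fire C i v) p by rewrite -[LHS]/(run C v (j :: q)) -Epq.
  have Lqt : legal_seq C (fire C j v) (q ++ t) by apply/legal_cat; rewrite Ew.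
  have Sqt : size (q ++ t) = N by rewrite size_cat -Spq -size_cat.
  have Tqt : terminal (run C (fire C j v) (q ++ t)) by rewrite run_cat Ew.
  have [h1 h2] := IH _ _ Sqt Lqt Tqt _ L2.
  split => // T2; have [E1 E2] := h2 T2; split; [by rewrite /= E1 | by rewrite [LHS]E2 run_cat Ew Ept].
Qed.
End Gen.

Arguments split3 {R n} F {i j}.
Lemma poly_main (R : realType) (n : nat) (C : 'M[int]_n) (hC : extended_dynkin R C)
  (v : 'I_n -> R) i j : i != j -> v i < -1 -> v j < -1 ->
  (exists s, legal_seq C v s /\ terminal (run C v s)) ->
  exists p q, [/\ legal_seq C v (i :: p), legal_seq C v (j :: q), size p = size q &
     run C v (i :: p) = run C v (j :: q)].
Proof.
move=> nij Hi Hj Hex.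
case: hC => hG _ [u [upos unull]].
have hG' := hG; case: hG' => [h2 [hneg hsym]].
have hii : (C i i)%:~R = 2 :> R by rewrite h2.
have hjj : (C j j)%:~R = 2 :> R by rewrite h2.
have nji : j != i by rewrite eq_sym.
case: (eqVneq (C i j) 0) => [c0|cn0].
  have c0' : C j i = 0 by apply/eqP; rewrite hsym c0.
  have hA : (C i j)%:~R = 0 :> R by rewrite c0.
  have hB : (C j i)%:~R = 0 :> R by rewrite c0'.
  exists [:: j], [:: i]; split.
  - rewrite /= !(fireE hG) hA; split => //; split => //; lra.
  - rewrite /= !(fireE hG) hB; split => //; split => //; lra.
  - by [].
  - apply: functional_extensionality => k; rewrite /run /= !(fireE hG) hA hB; ring.
have cn0' : C j i != 0 by rewrite hsym.
set a := `|C i j|%N; set b := `|C j i|%N.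
have Ea : C i j = - a%:Z by rewrite /a lez0_abs ?opprK // hneg.
have Eb : C j i = - b%:Z by rewrite /b lez0_abs ?opprK // hneg.
have a0 : (0 < a)%N by rewrite /a absz_gt0.
have b0 : (0 < b)%N by rewrite /b absz_gt0.
have hA : (C i j)%:~R = - a%:R :> R by rewrite Ea intrN -pmulrn.
have hB : (C j i)%:~R = - b%:R :> R by rewrite Eb intrN -pmulrn.
pose Ti := \sum_(k | (k != i) && (k != j)) (C i k)%:~R * u k.
pose Tj := \sum_(k | (k != j) && (k != i)) (C j k)%:~R * u k.
have termle (p q : 'I_n) : p != q -> (C p q)%:~R * u q <= 0 :> R.
  move=> npq; rewrite pmulr_lle0 // lerz0; exact: hneg.
have Ti0 : Ti <= 0 by rewrite -oppr_ge0 -sumrN; apply: sumr_ge0 => k /andP [k1 _]; rewrite oppr_ge0 termle // eq_sym.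
have Tj0 : Tj <= 0 by rewrite -oppr_ge0 -sumrN; apply: sumr_ge0 => k /andP [k1 _]; rewrite oppr_ge0 termle // eq_sym.
have eqi : 2 * u i - a%:R * u j + Ti = 0.
  by have := unull i; rewrite (split3 _ nij) hii hA mulNr.
have eqj : 2 * u j - b%:R * u i + Tj = 0.
  by have := unull j; rewrite (split3 _ nji) hjj hB mulNr addrAC.
have ui := upos i; have uj := upos j.
have ar : 0 <= a%:R :> R by [].
have br : 0 <= b%:R :> R by [].
have key : 4 * (u i * u j) = a%:R * b%:R * (u i * u j) - a%:R * u j * Tj - b%:R * u i * Ti + Ti * Tj.
  have -> : 4 * (u i * u j) = (2 * u i) * (2 * u j) by ring.
  have -> : 2 * u i = a%:R * u j - Ti by lra.
  have -> : 2 * u j = b%:R * u i - Tj by lra.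
  ring.
have X0 : 0 <= - (a%:R * u j * Tj) by rewrite -mulrN; apply: mulr_ge0; [apply: mulr_ge0 => //; lra | lra].
have Y0 : 0 <= - (b%:R * u i * Ti) by rewrite -mulrN; apply: mulr_ge0; [apply: mulr_ge0 => //; lra | lra].
have Z0 : 0 <= Ti * Tj by nra.
have uij : 0 < u i * u j by apply: mulr_gt0.
have ab4 : (a * b <= 4)%N.
  rewrite -(ler_nat R) natrM -(ler_pM2r uij); lra.

case/or4P: (fin_cases _ _ a0 b0 ab4) => [/andP [/eqP a1 /eqP b1]|/andP [/eqP a1 /eqP b1]|/andP [/eqP a1 /eqP b1]|/or3P [/andP [/eqP a1 /eqP b1]|/andP [/eqP a1 /eqP b1]|/eqP ab]].
- by apply: (@case11 R n C hG v i j hii hjj) => //; rewrite ?hA ?hB ?a1 ?b1.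
- by apply: (@case12 R n C hG v i j hii hjj) => //; rewrite ?hA ?hB ?a1 ?b1.
- by apply: (@case21 R n C hG v i j hii hjj) => //; rewrite ?hA ?hB ?a1 ?b1.
- by apply: (@case13 R n C hG v i j hii hjj) => //; rewrite ?hA ?hB ?a1 ?b1.
- by apply: (@case31 R n C hG v i j hii hjj) => //; rewrite ?hA ?hB ?a1 ?b1.
exfalso.
have hab : a%:R * b%:R = 4 :> R by rewrite -natrM ab.
rewrite hab in key.
have bui : 0 < b%:R * u i by apply: mulr_gt0 => //; rewrite ltr0n.
have auj : 0 < a%:R * u j by apply: mulr_gt0 => //; rewrite ltr0n.
have Ti00 : Ti = 0.
  have : b%:R * u i * Ti = 0 by lra.
  by move/eqP; rewrite mulf_eq0 (gt_eqF bui) => /eqP.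
have Tj00 : Tj = 0.
  have : a%:R * u j * Tj = 0 by lra.
  by move/eqP; rewrite mulf_eq0 (gt_eqF auj) => /eqP.
have Ci0 k : k != i -> k != j -> C i k = 0.
  move=> k1 k2.
  have := @psumr_eq0P _ _ (fun k => (k != i) && (k != j)) (fun k => - ((C i k)%:~R * u k)).
  move=> /(_ _ _ k) h.
  have hpos : forall k', (k' != i) && (k' != j) -> 0 <= - ((C i k')%:~R * u k').
    by move=> k' /andP [k'i _]; rewrite oppr_ge0 termle // eq_sym.
  have := h hpos.
  move: Ti00; rewrite /Ti => Ti00.
  rewrite sumrN Ti00 oppr0 => /(_ erefl); rewrite k1 k2 => /(_ isT) /eqP.
  rewrite oppr_eq0 mulf_eq0 (gt_eqF (upos k)) orbF intr_eq0 => /eqP //.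
have Cj0 k : k != j -> k != i -> C j k = 0.
  move=> k1 k2.
  have := @psumr_eq0P _ _ (fun k => (k != j) && (k != i)) (fun k => - ((C j k)%:~R * u k)).
  move=> /(_ _ _ k) h.
  have hpos : forall k', (k' != j) && (k' != i) -> 0 <= - ((C j k')%:~R * u k').
    by move=> k' /andP [k'i _]; rewrite oppr_ge0 termle // eq_sym.
  have := h hpos.
  move: Tj00; rewrite /Tj => Tj00.
  rewrite sumrN Tj00 oppr0 => /(_ erefl); rewrite k1 k2 => /(_ isT) /eqP.
  rewrite oppr_eq0 mulf_eq0 (gt_eqF (upos k)) orbF intr_eq0 => /eqP //.
pose Q (w : 'I_n -> R) := u i * w i + u j * w j.
have Qf k w : Q (fire C k w) = Q w.
  rewrite /Q !(fireE hG).
  case: (eqVneq k i) => [->|ki].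
    rewrite hii hA.
    have e : a%:R * u j = 2 * u i by lra.
    apply/eqP; rewrite -subr_eq0.
    have -> : u i * (w i - 2 * w i) + u j * (w j - - a%:R * w i) - (u i * w i + u j * w j)
      = w i * (a%:R * u j - 2 * u i) by ring.
    by rewrite e subrr mulr0.
  case: (eqVneq k j) => [->|kj].
    rewrite hjj hB.
    have e : b%:R * u i = 2 * u j by lra.
    apply/eqP; rewrite -subr_eq0.
    have -> : u i * (w i - - b%:R * w j) + u j * (w j - 2 * w j) - (u i * w i + u j * w j)
      = w j * (b%:R * u i - 2 * u j) by ring.
    by rewrite e subrr mulr0.
  have cki : C k i = 0 by apply/eqP; rewrite hsym Ci0.
  have ckj : C k j = 0 by apply/eqP; rewrite hsym Cj0.
  by rewrite cki ckj !mul0r !subr0.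
have Qrun s : forall w, Q (run C w s) = Q w.
  elim: s => [//|k s IH] w; rewrite -[run C w (k :: s)]/(run C (fire C k w) s) IH Qf //.
case: Hex => s [_ Ts].
have := Qrun s v; rewrite /Q.
have := Ts i; have := Ts j.
nra.
Qed.

Theorem corollary3p5 (R : realType) (n : nat) (C : 'M[int]_n)
    (hC : extended_dynkin R C) (v : 'I_n -> R) (s1 s2 : seq 'I_n) :
  legal_seq C v s1 -> terminal (run C v s1) ->
  legal_seq C v s2 -> terminal (run C v s2) ->
  size s1 = size s2 /\ run C v s1 = run C v s2.
Proof.
move=> L1 T1 L2 T2.
have pl := fun w i j => @poly_main R n C hC w i j.
have [_ h] := @main R n C pl (size s1) v s1 erefl L1 T1 s2 L2.
have [E1 E2] := h T2.
by split.
Qed.
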